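(* Let $(x_i,y_i)_{i=1}^7$ be point pairs in $\mathbb P^2\times\mathbb P^2$ and suppose there is an invertible projective transformation $H$ of $\mathbb P^2$ with $Hx_i=y_i$ for all $i$. Then the $7\times 9$ matrix $Z$ with rows $x_i^\top\otimes y_i^\top$ is rank deficient.
   Context: Work over $\mathbb C$; $x^\top\otimes y^\top$ denotes the Kronecker product, and equality $Hx_i=y_i$ is in projective space. *)

(* Defs.v *)
From HB Require Import structures.
From mathcomp Require Import all_boot all_order all_algebra.
From mathcomp Require Import complex.
From mathcomp Require Import reals.
Set Implicit Arguments. Unset Strict Implicit. Unset Printing Implicit Defensive.
Import Order.TTheory GRing.Theory Num.Theory.
Local Open Scope ring_scope.

(* Kronecker product of two row vectors: (u ⊗ v)_(a*n + b) = u_a * v_b.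
   mxvec flattens a matrix in row-major order, with index a*n+b for entry (a,b). *)
Definition kron_rV (F : nzRingType) (m n : nat) (u : 'rV[F]_m) (v : 'rV[F]_n)
  : 'rV[F]_(m * n) := mxvec (u^T *m v).

Definition Zmat (F : nzRingType) (x y : 'I_7 -> 'cV[F]_3) : 'M[F]_(7, 3 * 3) :=
  \matrix_(i < 7) kron_rV (x i)^T (y i)^T.

(* Equality H x = y in projective space P^2 for nonzero representatives. *)
Definition proj_eq (F : fieldType) (u v : 'cV[F]_3) : Prop :=
  exists2 lam : F, lam != 0 & u = lam *: v.

(* Main.v *)
Require Import Defs.
From HB Require Import structures.
From mathcomp Require Import all_boot all_order all_algebra.
From mathcomp Require Import complex.
From mathcomp Require Import reals.
From mathcomp Require Import ring.
Import Order.TTheory GRing.Theory Num.Theory.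
Local Open Scope ring_scope.
Local Open Scope complex_scope.
Definition pr (j : 'I_6) : 'I_3 * 'I_3 :=
  match val j with
  | 0 => (@Ordinal 3 0 isT, @Ordinal 3 0 isT)
  | 1 => (@Ordinal 3 0 isT, @Ordinal 3 1 isT)
  | 2 => (@Ordinal 3 0 isT, @Ordinal 3 2 isT)
  | 3 => (@Ordinal 3 1 isT, @Ordinal 3 1 isT)
  | 4 => (@Ordinal 3 1 isT, @Ordinal 3 2 isT)
  | _ => (@Ordinal 3 2 isT, @Ordinal 3 2 isT)
  end.
Definition Bm (F : nzRingType) (j : 'I_6) : 'M[F]_3 :=
  if (pr j).1 == (pr j).2 then delta_mx (pr j).1 (pr j).2
  else delta_mx (pr j).1 (pr j).2 + delta_mx (pr j).2 (pr j).1.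

Lemma sym_decomp (F : comRingType) (M : 'M[F]_3) : M^T = M ->
  \sum_(j < 6) M (pr j).1 (pr j).2 *: Bm F j = M.
Proof.
move=> hs; apply/matrixP => a b.
have S : forall i j, M i j = M j i by move=> i j; rewrite -{1}hs mxE.
rewrite summxE !big_ord_recl big_ord0 /Bm /=.
case: a => [[|[|[|a]]] Ha]; case: b => [[|[|[|b]]] Hb] //;
 rewrite (bool_irrelevance Ha isT) (bool_irrelevance Hb isT) !mxE /=;
 first [ring | rewrite [RHS]S; ring].
Qed.

Theorem mainTheorem18 (R : realType) (x y : 'I_7 -> 'cV[R[i]]_3)
  (hx : forall i, x i != 0) (hy : forall i, y i != 0)
  (H : 'M[R[i]]_3) (hH : H \in unitmx)
  (hHxy : forall i, proj_eq (H *m x i) (y i)) :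
  (\rank (Zmat x y) < 7)%N.
Proof.
pose N i := x i *m (invmx H *m y i)^T.
have symN : forall i, (N i)^T = N i.
  move=> i; rewrite /N; case: (hHxy i) => lam lam0 e.
  have -> : invmx H *m y i = lam^-1 *: x i.
    by rewrite -[x i](mulKmx hH) e -scalemxAr scalerA mulVf // scale1r.
  by rewrite !linearZ /= trmx_mul trmxK.
have eZ : Zmat x y = (\matrix_(i < 7, j < 6) N i (pr j).1 (pr j).2)
                      *m (\matrix_(j < 6) mxvec (Bm _ j *m H^T)).
  apply/row_matrixP => i; rewrite row_mul rowK mulmx_sum_row.
  have -> : kron_rV (x i)^T (y i)^T = mxvec (N i *m H^T).
    by rewrite /kron_rV /N trmxK trmx_mul -!mulmxA -trmx_mul mulmxV // trmx1 mulmx1.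
  rewrite -(@sym_decomp _ _ (symN i)) mulmx_suml linear_sum.
  apply: eq_bigr => j _; rewrite rowK !mxE -scalemxAl linearZ.
  done.
rewrite eZ; apply: leq_ltn_trans (mxrankM_maxl _ _) _.
exact: leq_ltn_trans (rank_leq_col _) _.
Qed.
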